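(* Fix a finite relational vocabulary $\sigma$ and integers $n,d\ge 0$. Two objects $X,Y$ of $\mathbf{STRUCT}[\sigma_n]_{(d,0)}^{\widetilde{\mathcal{T}(\sigma_n)}}$ are homomorphically equivalent if and only if they are homotopy equivalent in the generalized core model structure on this category.
   Context: Let $\sigma=\langle R_1,\dots,R_l\rangle$ be a finite relational vocabulary, $R_i$ of arity $p_i$, and $\sigma_n$ its expansion by $n$ constant symbols; all structures are finite. For a $\sigma$-structure $\mathfrak{A}$, its Gaifman graph has vertex set $A$ and an edge between $a,b$ iff both occur in a tuple of some $R_i^{\mathfrak{A}}$; $d(\cdot,\cdot)$ is shortest-path distance, $d(\vec a,b)=\min_i d(a_i,b)$, $B_d^{\mathfrak{A}}(\vec a)=\{b: d(\vec a,b)\le d\}$, and the $d$-neighborhood $N_d^{\mathfrak{A}}(\vec a)$ is the $\sigma_n$-structure on $B_d^{\mathfrak{A}}(\vec a)$ with relations $R_i^{\mathfrak{A}}\cap B_d^{\mathfrak{A}}(\vec a)^{p_i}$ and constants $a_1,\dots,a_n$. Homomorphisms of $d$-neighborhoods are relation-preserving maps of balls sending $a_i\mapsto b_i$. $\widetilde{\mathcal{T}(\sigma_n)}$ is the $\sigma_n$-structure whose universe is the set of closed $\sigma_n$-terms (the constant symbols), constants interpreted as themselves and all relations empty. The category $\mathbf{STRUCT}[\sigma_n]_{(d,0)}^{\widetilde{\mathcal{T}(\sigma_n)}}$ has objects the $d$-neighborhoods $N_d^{\mathfrak{A}}(\vec a)$, the $0$-neighborhoods $N_0^{\mathfrak{A}}(a)$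 and $\widetilde{\mathcal{T}(\sigma_n)}$; morphisms are homomorphisms of $d$-neighborhoods, the unique homomorphism $\widetilde{\mathcal{T}(\sigma_n)}\to N_d^{\mathfrak{A}}(\vec a)$, and the unique homomorphism $N_d^{\mathfrak{A}}(\vec a)\to N_0^{\mathfrak{A}}(a)$. Two objects $X,Y$ are homomorphically equivalent if there are morphisms $X\to Y$ and $Y\to X$. The generalized core model structure (of Droz and Zakharevich) is the model structure in which a morphism $f:X\to Y$ is a weak equivalence iff $X$ and $Y$ are homomorphically equivalent, and the acyclic fibrations are exactly the retractions (morphisms $r$ with $r\circ s=\mathrm{id}$ for some $s$); cofibrations are the morphisms with the left lifting property w.r.t. retractions and fibrations those with the right lifting property w.r.t. acyclic cofibrations. $X$ and $Y$ are homotopy equivalent if there are morphisms $f:X\to Y$, $g:Y\to X$ with $g\circ f$ homotopic to $\mathrm{id}_X$ and $f\circ g$ homotopic to $\mathrm{id}_Y$ in this model structure. *)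

(* Defs.v *)
From mathcomp Require Import all_boot.

Set Implicit Arguments.
Unset Strict Implicit.
Unset Printing Implicit Defensive.

(* Vocabulary sigma = <R_1,...,R_l>, R_i of arity p i;  n constants;   *)
(* neighbourhood radius d.                                             *)
Section Cat.
Variables (l : nat) (p : 'I_l -> nat) (n d : nat).

(* A finite sigma-structure A (universe 'I_card, every finite structure
   is isomorphic to one of these) together with a tuple a in A^n. *)
Record pstruct := PStruct {
  ps_card : nat;
  ps_rel : forall i : 'I_l, {set {ffun 'I_(p i) -> 'I_ps_card}};
  ps_cst : {ffun 'I_n -> 'I_ps_card} }.

Definition gadj (A : pstruct) (x y : 'I_(ps_card A)) : bool :=
  [exists i : 'I_l, [exists t in ps_rel A i, (x \in codom t) && (y \in codom t)]].

(* B_k(a) = { b | d(a, b) <= k } *)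
Fixpoint ballk (A : pstruct) (k : nat) : {set 'I_(ps_card A)} :=
  match k with
  | 0 => [set x | x \in codom (ps_cst A)]
  | k'.+1 => ballk A k' :|: [set y | [exists x in ballk A k', gadj x y]]
  end.

Definition ball (A : pstruct) := ballk A d.

Definition ballT (A : pstruct) := {x : 'I_(ps_card A) | x \in ball A}.

Definition is_nhom (A B : pstruct) (f : {ffun ballT A -> ballT B}) : bool :=
  [forall i : 'I_n, forall x : ballT A,
     (val x == ps_cst A i) ==> (val (f x) == ps_cst B i)] &&
  [forall i : 'I_l, forall t : {ffun 'I_(p i) -> ballT A},
     ([ffun j => val (t j)] \in ps_rel A i) ==>
     ([ffun j => val (f (t j))] \in ps_rel B i)].

Definition nhom (A B : pstruct) := {f : {ffun ballT A -> ballT B} | is_nhom f}.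

Lemma is_nhom_id (A : pstruct) : is_nhom [ffun x : ballT A => x].
Proof.
apply/andP; split.
  by apply/forallP => i; apply/forallP => x; rewrite ffunE; apply/implyP.
apply/forallP => i; apply/forallP => t; apply/implyP => H.
suff -> : [ffun j => val ([ffun x : ballT A => x] (t j))] = [ffun j => val (t j)] by [].
by apply/ffunP => j; rewrite !ffunE.
Qed.

Lemma is_nhom_comp (A B C : pstruct) (g : {ffun ballT B -> ballT C})
  (f : {ffun ballT A -> ballT B}) :
  is_nhom g -> is_nhom f -> is_nhom [ffun x => g (f x)].
Proof.
move=> /andP [gc gr] /andP [fc fr]; apply/andP; split.
  apply/forallP => i; apply/forallP => x; apply/implyP => /eqP Hx.
  rewrite ffunE.
  have /implyP H1 := forallP (forallP fc i) x.
  have /eqP H2 := H1 (introT eqP Hx).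
  have /implyP H3 := forallP (forallP gc i) (f x).
  by apply: H3; apply/eqP.
apply/forallP => i; apply/forallP => t; apply/implyP => Ht.
have /implyP H1 := forallP (forallP fr i) t.
have H2 := H1 Ht.
have /implyP H3 := forallP (forallP gr i) [ffun j => f (t j)].
have H4 : [ffun j => val ([ffun j0 => f (t j0)] j)] \in ps_rel B i.
  suff -> : [ffun j => val ([ffun j0 => f (t j0)] j)] =
            [ffun j => val (f (t j))] by [].
  by apply/ffunP => j; rewrite !ffunE.
have H5 := H3 H4.
suff -> : [ffun j => val ([ffun x => g (f x)] (t j))] =
          [ffun j => val (g ([ffun j0 => f (t j0)] j))] by [].
by apply/ffunP => j; rewrite !ffunE.
Qed.

Definition nhom_id (A : pstruct) : nhom A A := exist (@is_nhom A A) _ (is_nhom_id A).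

Definition nhom_comp (A B C : pstruct) (g : nhom B C) (f : nhom A B) : nhom A C :=
  exist (@is_nhom A C) _ (is_nhom_comp (proj2_sig g) (proj2_sig f)).

Definition nhom_exists (A B : pstruct) : bool :=
  [exists f : {ffun ballT A -> ballT B}, is_nhom f].

Lemma nhom_exists_comp (A B C : pstruct) :
  nhom A B -> nhom_exists B C -> nhom_exists A C.
Proof.
move=> f /existsP [g Hg]; apply/existsP.
exists [ffun x => g (proj1_sig f x)].
exact: is_nhom_comp Hg (proj2_sig f).
Qed.

(* Objects of STRUCT[sigma_n]_(d,0)^T:
   OT    = the term structure T(sigma_n)~,
   ON A  = the d-neighbourhood N_d^A(a),
   O0 A  = the 0-neighbourhood N_0^A(a). *)
Inductive obj := OT | ON of pstruct | O0 of pstruct.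

(* Morphisms: homomorphisms of d-neighbourhoods, the unique map out of T,
   the unique map N_d^A(a) -> N_0^A(a), identities, and their composites. *)
Definition Hom (X Y : obj) : Type :=
  match X, Y with
  | OT, _ => unit
  | ON A, ON B => nhom A B
  | ON A, O0 B => {u : unit | nhom_exists A B}
  | O0 A, O0 B => {u : unit | A = B}
  | _, _ => Empty_set
  end.

Definition idm (X : obj) : Hom X X :=
  match X with
  | OT => tt
  | ON A => nhom_id A
  | O0 A => exist _ tt erefl
  end.

Definition comp (X Y Z : obj) : Hom Y Z -> Hom X Y -> Hom X Z.
Proof.
destruct X as [|A|A]; destruct Y as [|B|B]; destruct Z as [|C|C];
  simpl; intros g f.
all: try exact tt.
all: try (match type of f with Empty_set => case f end).
all: try (match type of g with Empty_set => case g end).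
- exact (nhom_comp g f).
- exists tt. exact (nhom_exists_comp f (proj2_sig g)).
- exists tt. case: g => _ <-. exact (proj2_sig f).
- exists tt. exact (eq_trans (proj2_sig f) (proj2_sig g)).
Defined.


Definition homeq (X Y : obj) : Prop := inhabited (Hom X Y) /\ inhabited (Hom Y X).

Definition weq (X Y : obj) (f : Hom X Y) : Prop := homeq X Y.

(* acyclic fibrations = retractions *)
Definition retraction (X Y : obj) (r : Hom X Y) : Prop :=
  exists s : Hom Y X, comp r s = idm Y.

Definition cofib (A B : obj) (i : Hom A B) : Prop :=
  forall (E F : obj) (q : Hom E F), retraction q ->
  forall (u : Hom A E) (v : Hom B F), comp q u = comp v i ->
  exists h : Hom B E, comp h i = u /\ comp q h = v.

Definition acofib (A B : obj) (i : Hom A B) : Prop := cofib i /\ weq i.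

Definition fib (E F : obj) (q : Hom E F) : Prop :=
  forall (A B : obj) (i : Hom A B), acofib i ->
  forall (u : Hom A E) (v : Hom B F), comp q u = comp v i ->
  exists h : Hom B E, comp h i = u /\ comp q h = v.

(* Cylinder object for X: a factorisation of the fold map X |_| X -> X
   as a cofibration (j0,j1) followed by a weak equivalence s.  Since the
   category need not have coproducts, "(j0,j1) : X |_| X -> C is a
   cofibration" is expressed representably: the pair (j0,j1) has the
   left lifting property against every acyclic fibration (retraction). *)
Definition cylinder (X C : obj) (j0 j1 : Hom X C) (s : Hom C X) : Prop :=
  [/\ comp s j0 = idm X, comp s j1 = idm X, weq s &
    forall (E F : obj) (q : Hom E F), retraction q ->
    forall (u0 u1 : Hom X E) (v : Hom C F),
      comp q u0 = comp v j0 -> comp q u1 = comp v j1 ->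
      exists h : Hom C E, [/\ comp h j0 = u0, comp h j1 = u1 & comp q h = v]].

(* Path object for Y: a factorisation of the diagonal Y -> Y x Y as a
   weak equivalence r followed by a fibration (e0,e1), the latter again
   expressed representably (RLP against acyclic cofibrations). *)
Definition pathobj (Y P : obj) (r : Hom Y P) (e0 e1 : Hom P Y) : Prop :=
  [/\ comp e0 r = idm Y, comp e1 r = idm Y, weq r &
    forall (A B : obj) (i : Hom A B), acofib i ->
    forall (u : Hom A P) (v0 v1 : Hom B Y),
      comp e0 u = comp v0 i -> comp e1 u = comp v1 i ->
      exists h : Hom B P, [/\ comp h i = u, comp e0 h = v0 & comp e1 h = v1]].

Definition left_htpc (X Y : obj) (f g : Hom X Y) : Prop :=
  exists (C : obj) (j0 j1 : Hom X C) (s : Hom C X) (H : Hom C Y),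
    [/\ cylinder j0 j1 s, comp H j0 = f & comp H j1 = g].

Definition right_htpc (X Y : obj) (f g : Hom X Y) : Prop :=
  exists (P : obj) (r : Hom Y P) (e0 e1 : Hom P Y) (K : Hom X P),
    [/\ pathobj r e0 e1, comp e0 K = f & comp e1 K = g].

(* homotopic = left and right homotopic (Hovey, Def. 1.2.4) *)
Definition homotopic (X Y : obj) (f g : Hom X Y) : Prop :=
  left_htpc f g /\ right_htpc f g.

Definition htpy_equiv (X Y : obj) : Prop :=
  exists (f : Hom X Y) (g : Hom Y X),
    homotopic (comp g f) (idm X) /\ homotopic (comp f g) (idm Y).

End Cat.

(* Main.v *)
From Pilot Require Import Defs.
From mathcomp Require Import all_boot.
From Stdlib Require Import ProofIrrelevance.

Set Implicit Arguments.
Unset Strict Implicit.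
Unset Printing Implicit Defensive.

Notation dcomp := Pilot.Defs.comp.

Section Work.
Variables (l : nat) (p : 'I_l -> nat) (n d : nat).
Local Notation pstruct := (pstruct p n).
Local Notation ballT := (ballT d).
Local Notation nhom := (nhom d).

Lemma ballk_mono (A : pstruct) k k' : k <= k' -> ballk A k \subset ballk A k'.
Proof.
move=> /subnK <-; elim: (k' - k) => [|m IH] //=.
apply: subset_trans IH _; exact: subsetUl.
Qed.

Lemma ball_map (A C : pstruct) (phi : ballT A -> 'I_(ps_card C)) :
  (forall i (x : ballT A), val x = ps_cst A i -> phi x = ps_cst C i) ->
  (forall i (t : {ffun 'I_(p i) -> ballT A}), [ffun j => val (t j)] \in ps_rel A i ->
      [ffun j => phi (t j)] \in ps_rel C i) ->
  forall x : ballT A, phi x \in ball d C.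
Proof.
move=> Hc Hr.
suff H : forall k, k <= d -> forall x : ballT A, val x \in ballk A k -> phi x \in ballk C k.
  by move=> x; apply: H => //; exact: (valP x).
elim=> [|k IH] Hk x.
  rewrite /= inE => /codomP [i Hi]; rewrite inE (Hc i x Hi); exact: codom_f.
rewrite /= in_setU => /orP [Hx|].
  by rewrite in_setU (IH (ltnW Hk) x Hx).
rewrite inE => /existsP [y /andP [Hy /existsP [i /existsP [t /andP [Ht /andP [Hyt Hxt]]]]]].
have Hin : forall j, t j \in ball d A.
  move=> j; apply: (subsetP (ballk_mono A Hk)).
  rewrite /= in_setU; apply/orP; right; rewrite inE; apply/existsP; exists y.
  rewrite Hy /=; apply/existsP; exists i; apply/existsP; exists t.
  by rewrite Ht Hyt codom_f.
pose tau := [ffun j => (exist _ (t j) (Hin j) : ballT A)].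
have Htau : [ffun j => val (tau j)] = t by apply/ffunP => j; rewrite !ffunE.
have HR := Hr i tau; rewrite Htau in HR; have {}HR := HR Ht.
move: Hyt Hxt => /codomP [j0 Hj0] /codomP [j1 Hj1].
have Ex : tau j1 = x by apply: val_inj; rewrite /= ffunE /= Hj1.
have Hy0 : val (tau j0) \in ballk A k by rewrite ffunE /= -Hj0.
have := IH (ltnW Hk) _ Hy0 => Hphy.
rewrite in_setU; apply/orP; right; rewrite inE; apply/existsP; exists (phi (tau j0)).
rewrite Hphy /=; apply/existsP; exists i; apply/existsP.
exists [ffun j => phi (tau j)]; rewrite HR /=.
apply/andP; split; apply/codomP.
  by exists j0; rewrite !ffunE.
by exists j1; rewrite ffunE Ex.
Qed.

Section MkNhom.
Variables (A C : pstruct) (phi : ballT A -> 'I_(ps_card C)).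
Hypothesis Hc : forall i (x : ballT A), val x = ps_cst A i -> phi x = ps_cst C i.
Hypothesis Hr : forall i (t : {ffun 'I_(p i) -> ballT A}), [ffun j => val (t j)] \in ps_rel A i ->
      [ffun j => phi (t j)] \in ps_rel C i.

Definition mkf : {ffun ballT A -> ballT C} :=
  [ffun x => (exist _ (phi x) (ball_map Hc Hr x) : ballT C)].

Lemma mkf_nhom : is_nhom mkf.
Proof.
apply/andP; split.
  apply/forallP => i; apply/forallP => x; apply/implyP => /eqP Hx.
  by rewrite ffunE /= (Hc Hx).
apply/forallP => i; apply/forallP => t; apply/implyP => Ht.
have -> : [ffun j => val (mkf (t j))] = [ffun j => phi (t j)].
  by apply/ffunP => j; rewrite !ffunE.
exact: Hr.
Qed.

Definition mkn : nhom A C := exist _ mkf mkf_nhom.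

Lemma mknE x : val (val mkn x) = phi x.
Proof. by rewrite /= ffunE. Qed.
End MkNhom.

Lemma nhom_ext (A C : pstruct) (f g : nhom A C) :
  (forall x, val (val f x) = val (val g x)) -> f = g.
Proof.
case: f => f Hf; case: g => g Hg /= H.
have E : f = g by apply/ffunP => x; apply: val_inj; exact: H.
subst g; congr exist; exact: eq_irrelevance.
Qed.

Lemma nhom_compE (A B C : pstruct) (g : nhom B C) (f : nhom A B) x :
  val (nhom_comp g f) x = val g (val f x).
Proof. by rewrite /= ffunE. Qed.

Lemma nhom_idE (A : pstruct) x : val (nhom_id d A) x = x.
Proof. by rewrite /= ffunE. Qed.

Lemma nhom_cst (A C : pstruct) (f : nhom A C) i (x : ballT A) :
  val x = ps_cst A i -> val (val f x) = ps_cst C i.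
Proof.
case: f => f /andP [Hc _] /= Hx.
by have /implyP H := forallP (forallP Hc i) x; apply/eqP; apply: H; apply/eqP.
Qed.

Lemma nhom_rel (A C : pstruct) (f : nhom A C) i (t : {ffun 'I_(p i) -> ballT A}) :
  [ffun j => val (t j)] \in ps_rel A i -> [ffun j => val (val f (t j))] \in ps_rel C i.
Proof.
case: f => f /andP [_ Hr] /= Ht.
by have /implyP H := forallP (forallP Hr i) t; apply: H.
Qed.


Section Prod.
Variable A : pstruct.
Definition PT := ('I_(ps_card A) * 'I_(ps_card A))%type.
Definition Prod : pstruct := @PStruct l p n #|{: PT}|
  (fun i => [set [ffun j => enum_rank ((t.1 : {ffun _ -> _}) j, (t.2 : {ffun _ -> _}) j)]
               | t in setX (ps_rel A i) (ps_rel A i)])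
  [ffun i => enum_rank (ps_cst A i, ps_cst A i)].

Definition sel (b : bool) (u : PT) := if b then u.2 else u.1.

Lemma Diag_c i (x : ballT A) : val x = ps_cst A i ->
  (fun x : ballT A => enum_rank (val x, val x) : 'I_(ps_card Prod)) x = ps_cst Prod i.
Proof. by move=> H; rewrite /= ffunE H. Qed.

Lemma Diag_r i (t : {ffun 'I_(p i) -> ballT A}) : [ffun j => val (t j)] \in ps_rel A i ->
  [ffun j => (fun x : ballT A => enum_rank (val x, val x) : 'I_(ps_card Prod)) (t j)] \in ps_rel Prod i.
Proof.
move=> Ht; apply/imsetP; exists ([ffun j => val (t j)], [ffun j => val (t j)]).
  by rewrite inE Ht.
by apply/ffunP => j; rewrite !ffunE.
Qed.

Definition Diag : nhom A Prod := mkn Diag_c Diag_r.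

Lemma Proj_c b i (x : ballT Prod) : val x = ps_cst Prod i ->
  (fun x : ballT Prod => sel b (enum_val (val x))) x = ps_cst A i.
Proof. by move=> H; rewrite /= H ffunE enum_rankK; case: b. Qed.

Lemma Proj_r b i (t : {ffun 'I_(p i) -> ballT Prod}) : [ffun j => val (t j)] \in ps_rel Prod i ->
  [ffun j => (fun x : ballT Prod => sel b (enum_val (val x))) (t j)] \in ps_rel A i.
Proof.
case/imsetP => tt; rewrite inE => /andP [H1 H2] E.
have Ej : forall j, val (t j) = enum_rank (tt.1 j, tt.2 j).
  by move=> j; move/ffunP: E => /(_ j); rewrite !ffunE.
suff -> : [ffun j => sel b (enum_val (val (t j)))] = if b then tt.2 else tt.1 by case: b.
by apply/ffunP => j; rewrite ffunE Ej enum_rankK; case: b.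
Qed.

Definition Proj b : nhom Prod A := mkn (Proj_c b) (Proj_r b).

Section Pair.
Variables (B : pstruct) (v0 v1 : nhom B A).
Definition pairf (x : ballT B) : 'I_(ps_card Prod) := enum_rank (val (val v0 x), val (val v1 x)).
Lemma Pair_c i (x : ballT B) : val x = ps_cst B i -> pairf x = ps_cst Prod i.
Proof. by move=> H; rewrite /pairf /= ffunE (nhom_cst v0 H) (nhom_cst v1 H). Qed.
Lemma Pair_r i (t : {ffun 'I_(p i) -> ballT B}) : [ffun j => val (t j)] \in ps_rel B i ->
  [ffun j => pairf (t j)] \in ps_rel Prod i.
Proof.
move=> Ht; apply/imsetP.
exists ([ffun j => val (val v0 (t j))], [ffun j => val (val v1 (t j))]).
  by rewrite inE (nhom_rel v0 Ht) (nhom_rel v1 Ht).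
by apply/ffunP => j; rewrite !ffunE.
Qed.
Definition Pair : nhom B Prod := mkn Pair_c Pair_r.

Lemma Proj_Pair b : nhom_comp (Proj b) Pair = if b then v1 else v0.
Proof.
apply: nhom_ext => x; rewrite nhom_compE !mknE /pairf enum_rankK.
by case: b.
Qed.
End Pair.

Lemma Proj_Diag b : nhom_comp (Proj b) Diag = nhom_id d A.
Proof.
apply: nhom_ext => x; rewrite nhom_compE nhom_idE !mknE enum_rankK.
by case: b.
Qed.

Lemma Prod_mono (B : pstruct) (f g : nhom B Prod) :
  nhom_comp (Proj false) f = nhom_comp (Proj false) g ->
  nhom_comp (Proj true) f = nhom_comp (Proj true) g -> f = g.
Proof.
move=> E0 E1; apply: nhom_ext => x.
have H0 := congr1 (fun h : nhom B A => val (val h x)) E0.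
have H1 := congr1 (fun h : nhom B A => val (val h x)) E1.
rewrite !nhom_compE !mknE /= in H0 H1.
apply: (can_inj (@enum_valK _)).
by move: H1 H0; case: (enum_val (val (val f x))) => a b; case: (enum_val _) => a' b' /= -> ->.
Qed.
End Prod.


(* ---------------- cylinder (amalgamated sum over constants) ---------------- *)
Section Cyl.
Variable A : pstruct.
Definition CT := (bool * 'I_(ps_card A))%type.
Definition gam (b : bool) (x : 'I_(ps_card A)) : CT :=
  if x \in codom (ps_cst A) then (false, x) else (b, x).
Lemma gam2 b x : (gam b x).2 = x.
Proof. by rewrite /gam; case: ifP. Qed.
Lemma gam_cst b i : gam b (ps_cst A i) = (false, ps_cst A i).
Proof. by rewrite /gam codom_f. Qed.

Definition Cyl : pstruct := @PStruct l p n #|{: CT}|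
  (fun i => [set [ffun j => enum_rank (gam bt.1 ((bt.2 : {ffun _ -> _}) j))]
               | bt in setX [set: bool] (ps_rel A i)])
  [ffun i => enum_rank (false, ps_cst A i)].

Lemma S_c i (x : ballT Cyl) : val x = ps_cst Cyl i ->
  (fun x : ballT Cyl => (enum_val (val x)).2) x = ps_cst A i.
Proof. by move=> H; rewrite /= H ffunE enum_rankK. Qed.

Lemma S_r i (t : {ffun 'I_(p i) -> ballT Cyl}) : [ffun j => val (t j)] \in ps_rel Cyl i ->
  [ffun j => (fun x : ballT Cyl => (enum_val (val x)).2) (t j)] \in ps_rel A i.
Proof.
case/imsetP => bt; rewrite inE => /andP [_ H2] E.
have Ej : forall j, val (t j) = enum_rank (gam bt.1 (bt.2 j)).
  by move=> j; move/ffunP: E => /(_ j); rewrite !ffunE.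
suff -> : [ffun j => (enum_val (val (t j))).2] = bt.2 by [].
by apply/ffunP => j; rewrite ffunE Ej enum_rankK gam2.
Qed.

Definition Sm : nhom Cyl A := mkn S_c S_r.

Lemma J_c b i (x : ballT A) : val x = ps_cst A i ->
  (fun x : ballT A => enum_rank (gam b (val x)) : 'I_(ps_card Cyl)) x = ps_cst Cyl i.
Proof. by move=> H; rewrite /= H gam_cst ffunE. Qed.

Lemma J_r b i (t : {ffun 'I_(p i) -> ballT A}) : [ffun j => val (t j)] \in ps_rel A i ->
  [ffun j => (fun x : ballT A => enum_rank (gam b (val x)) : 'I_(ps_card Cyl)) (t j)]
     \in ps_rel Cyl i.
Proof.
move=> Ht; apply/imsetP; exists (b, [ffun j => val (t j)]).
  by rewrite inE Ht in_setT.
by apply/ffunP => j; rewrite !ffunE.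
Qed.

Definition Jm b : nhom A Cyl := mkn (J_c b) (J_r b).

Lemma S_J b : nhom_comp Sm (Jm b) = nhom_id d A.
Proof. by apply: nhom_ext => x; rewrite nhom_compE nhom_idE !mknE enum_rankK gam2. Qed.

Lemma S_J' b x : val Sm (val (Jm b) x) = x.
Proof. by apply: val_inj; rewrite !mknE enum_rankK gam2. Qed.

Lemma Cyl_canon k z : z \in ballk Cyl k -> exists b y, z = enum_rank (gam b y).
Proof.
elim: k => [|k IH] /=.
  rewrite inE => /codomP [i ->]; exists false, (ps_cst A i).
  by rewrite ffunE gam_cst.
rewrite in_setU => /orP [/IH //|].
rewrite inE => /existsP [y /andP [_ /existsP [i /existsP [t /andP [Ht /andP [_ Hz]]]]]].
case/imsetP: Ht Hz => bt _ -> /codomP [j ->].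
by exists bt.1, (bt.2 j); rewrite ffunE.
Qed.

Lemma J_S (z : ballT Cyl) : exists b, val (Jm b) (val Sm z) = z.
Proof.
have [b [y Hy]] := Cyl_canon (valP z).
exists b; apply: val_inj; rewrite !mknE.
by move: Hy; case: z => /= z _ ->; rewrite enum_rankK gam2.
Qed.

Lemma Cyl_epi (F : pstruct) (f g : nhom Cyl F) :
  nhom_comp f (Jm false) = nhom_comp g (Jm false) ->
  nhom_comp f (Jm true) = nhom_comp g (Jm true) -> f = g.
Proof.
move=> E0 E1; apply: nhom_ext => z.
have [b Hb] := J_S z.
have E : nhom_comp f (Jm b) = nhom_comp g (Jm b) by case: b {Hb}.
have := congr1 (fun h : nhom A F => val (val h (val Sm z))) E.
by rewrite !nhom_compE Hb.
Qed.

Section Glue.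
Variables (E : pstruct) (u0 u1 : nhom A E).
Definition U (b : bool) := if b then u1 else u0.

Lemma agree (x : ballT A) : val x \in codom (ps_cst A) ->
  val (val u0 x) = val (val u1 x).
Proof. by case/codomP => i Hi; rewrite (nhom_cst u0 Hi) (nhom_cst u1 Hi). Qed.

Lemma keyU b (x : ballT A) : val (val (U (gam b (val x)).1) x) = val (val (U b) x).
Proof.
rewrite /gam; case: ifP => H //=.
by case: b => //=; rewrite (agree H).
Qed.

Definition gluef (z : ballT Cyl) : 'I_(ps_card E) :=
  val (val (U (enum_val (val z)).1) (val Sm z)).

Lemma G_c i (z : ballT Cyl) : val z = ps_cst Cyl i -> gluef z = ps_cst E i.
Proof.
move=> H; rewrite /gluef H /= ffunE enum_rankK /=.
apply: nhom_cst. by rewrite /mkf ffunE /= H ffunE enum_rankK.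
Qed.

Lemma G_r i (t : {ffun 'I_(p i) -> ballT Cyl}) : [ffun j => val (t j)] \in ps_rel Cyl i ->
  [ffun j => gluef (t j)] \in ps_rel E i.
Proof.
case/imsetP => bt; rewrite inE => /andP [_ H2] Et.
have Ej : forall j, val (t j) = enum_rank (gam bt.1 (bt.2 j)).
  by move=> j; move/ffunP: Et => /(_ j); rewrite !ffunE.
pose tau := [ffun j => val Sm (t j)].
have Htau : [ffun j => val (tau j)] = bt.2.
  by apply/ffunP => j; rewrite !ffunE /= Ej enum_rankK gam2.
have := nhom_rel (U bt.1) (i := i) (t := tau); rewrite Htau => /(_ H2).
suff -> : [ffun j => gluef (t j)] = [ffun j => val (val (U bt.1) (tau j))] by [].
apply/ffunP => j.
have Ht : tau j = val Sm (t j) by rewrite /tau ffunE.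
rewrite (ffunE (fun j => gluef (t j))) (ffunE (fun j => val (val (U bt.1) (tau j)))) Ht /gluef.
have Hv : val (val Sm (t j)) = bt.2 j by rewrite mknE Ej enum_rankK gam2.
rewrite -(keyU bt.1 (val Sm (t j))) Ej enum_rankK Hv.
done.
Qed.

Definition Glue : nhom Cyl E := mkn G_c G_r.

Lemma Glue_J b : nhom_comp Glue (Jm b) = U b.
Proof.
apply: nhom_ext => x; rewrite nhom_compE mknE /gluef S_J' mknE enum_rankK.
exact: keyU.
Qed.
End Glue.
End Cyl.


Local Notation obj := (obj p n).
Local Notation Hom := (Hom d).

Definition SS (X : obj) := forall Z (f g : Hom X Z), f = g.
Definition coSS (Y : obj) := forall Z (f g : Hom Z Y), f = g.

Lemma SS_OT : SS (@OT l p n). Proof. by move=> Z [] []. Qed.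
Lemma SS_O0 A : SS (O0 A).
Proof. by case=> [|B|B] //= [] [] H [] [] H'; congr exist; apply: proof_irrelevance. Qed.
Lemma coSS_OT : coSS (@OT l p n). Proof. by case=> //= [] [] []. Qed.
Lemma coSS_O0 A : coSS (O0 A).
Proof.
case=> [|B|B] //=; first by case; case.
  by case=> [] [] H [] [] H'; congr exist; apply: proof_irrelevance.
by case=> [] [] H [] [] H'; congr exist; apply: proof_irrelevance.
Qed.

Lemma homeq_refl (X : obj) : homeq d X X.
Proof. by split; constructor; exact: idm. Qed.

Lemma homotopic_triv X Y (f g : Hom X Y) : SS X -> coSS Y -> homotopic f g.
Proof.
move=> HX HY; split.
  exists X, (idm d X), (idm d X), (idm d X), f; split; try exact: HX.
  split; try exact: HX; first exact: homeq_refl.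
  move=> E F q _ u0 u1 v _ _; exists u0; split; exact: HX.
exists Y, (idm d Y), (idm d Y), (idm d Y), f; split; try exact: HY.
split; try exact: HY; first exact: homeq_refl.
move=> A' B' i _ u v0 v1 _ _; exists v0; split; exact: HY.
Qed.

Lemma nhom_compA (A B C D : pstruct) (h : nhom C D) (g : nhom B C) (f : nhom A B) :
  nhom_comp h (nhom_comp g f) = nhom_comp (nhom_comp h g) f.
Proof. by apply: nhom_ext => x; rewrite !nhom_compE. Qed.

Lemma nhom_comp_id (A B : pstruct) (f : nhom A B) : nhom_comp f (nhom_id d A) = f.
Proof. by apply: nhom_ext => x; rewrite !nhom_compE nhom_idE. Qed.

Lemma main_ON (A : pstruct) (e : Hom (ON A) (ON A)) : homotopic e (idm d (ON A)).
Proof.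
split.
  exists (ON (Cyl A)), (Jm A false), (Jm A true), (Sm A), (Glue e (nhom_id d A)).
  split; [split| exact: Glue_J | exact: Glue_J].
  - exact: S_J.
  - exact: S_J.
  - by split; constructor; [exact: (Sm A) | exact: (Jm A false)].
  move=> E F q _ u0 u1 v H0 H1.
  case: E q u0 u1 H0 H1 => [|E'|E'] q u0 u1 H0 H1.
  + by case: u0.
  + exists (Glue u0 u1); split; [exact: Glue_J | exact: Glue_J |].
    case: F q v H0 H1 => [|F'|F'] q v H0 H1.
    * by case: q.
    * apply: Cyl_epi; rewrite -nhom_compA Glue_J /=.
        exact: H0.
      exact: H1.
    * exact: coSS_O0.
  + exists (dcomp u0 (Sm A : Hom (ON (Cyl A)) (ON A))); split; try exact: coSS_O0.
    case: F q v H0 H1 => [|F'|F'] q v H0 H1; try by case: q.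
    exact: coSS_O0.
exists (ON (Prod A)), (Diag A), (Proj A false), (Proj A true), (Pair e (nhom_id d A)).
split; [split| exact: Proj_Pair | exact: Proj_Pair].
- exact: Proj_Diag.
- exact: Proj_Diag.
- by split; constructor; [exact: (Diag A) | exact: (Proj A false)].
move=> A' B' i _ u v0 v1 H0 H1.
case: B' i v0 v1 H0 H1 => [|B''|B''] i v0 v1 H0 H1.
- exists tt; split; try exact: SS_OT.
  case: A' i u H0 H1 => [|A''|A''] i u H0 H1; try by case: i.
  exact: SS_OT.
- exists (Pair v0 v1); split; [| exact: Proj_Pair | exact: Proj_Pair].
  case: A' i u H0 H1 => [|A''|A''] i u H0 H1.
  + exact: SS_OT.
  + apply: Prod_mono.
      by rewrite nhom_compA Proj_Pair; symmetry; exact: H0.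
    by rewrite nhom_compA Proj_Pair; symmetry; exact: H1.
  + by case: i.
- by case: v0.
Qed.

End Work.

Theorem proposition11 (l : nat) (p : 'I_l -> nat) (n d : nat) (X Y : obj p n) :
  homeq d X Y <-> htpy_equiv d X Y.
Proof.
split; last first.
  by case=> f [g _]; split; constructor.
case=> [[f] [g]].
case: X Y f g => [|A|A] [|B|B] f g.
all: try by case: f.
all: try by case: g.
all: exists f, g; split.
all: try exact: main_ON.
all: apply: homotopic_triv.
all: first [exact: SS_OT | exact: coSS_OT | exact: SS_O0 | exact: coSS_O0].
Qed.
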